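(* Let $N\ge1$ be an integer, $d>0$, $0\le s_1\le s_2\le\dots\le s_N$, and let $T$ satisfy $Nd\le T<(N+1)d$. Consider the problem $$\min_{x\in\mathbb{R}^{N+1}}\ \sum_{i=1}^{N+1}x_i^2$$ subject to - $\sum_{i=1}^k x_i\ge s_k+kd$ for $1\le k\le N$, - $x_i\ge 2d$ for $2\le i\le N$, - $x_{N+1}\ge d$, - $\sum_{i=1}^{N+1}x_i=T+Nd$. Assume this problem is feasible. Then its optimal solution $x^*$ is given by $$x_1^*=\max\left\{\frac{T-(N-2)d}{2},\ \max_{1\le k\le N}\{s_k-(k-2)d\}\right\},$$ $$x_i^*=2d\quad (2\le i\le N),$$ $$x_{N+1}^*=T-(N-2)d-x_1^*.$$
   Context: This optimization problem arises from minimizing the area under the age-of-information curve of a single energy harvesting transmitter. The $s_k$ are energy arrival times, $d$ is the fixed service (transmission) time, and $T$ is the session length. The variables are $x_1=t_1+d$, $x_i=t_i-t_{i-1}+d$ for $2\le i\le N$, and $x_{N+1}=T-t_N$, where $t_i$ are the update transmission times. *)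

(* Defs.v *)
From mathcomp Require Import all_boot all_order all_algebra.

Import Order.TTheory GRing.Theory Num.Theory.
Local Open Scope ring_scope.

Section AoI.
Variable R : realFieldType.

(* 1-based coordinate access: xc n x i = x_i for 1 <= i <= n+1 *)
Definition xc (n : nat) (x : 'rV[R]_(n.+1)) (i : nat) : R := x 0 (inord i.-1).

Definition cost (N : nat) (x : 'rV[R]_(N.+1)) : R :=
  \sum_(1 <= i < N.+2) xc N x i ^+ 2.

(* constraints of the problem; s is indexed 1..N *)
Definition feasible (N : nat) (d T : R) (s : nat -> R) (x : 'rV[R]_(N.+1)) : Prop :=
  [/\ (forall k, (1 <= k <= N)%N -> \sum_(1 <= i < k.+1) xc N x i >= s k + k%:R * d),
      (forall i, (2 <= i <= N)%N -> xc N x i >= 2 * d),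
      xc N x N.+1 >= d
    & \sum_(1 <= i < N.+2) xc N x i = T + N%:R * d].

Definition x1star (N : nat) (d T : R) (s : nat -> R) : R :=
  Num.max ((T - (N%:R - 2) * d) / 2)
          (\big[Num.max/(s 1%N - (1 - 2) * d)]_(1 <= k < N.+1) (s k - (k%:R - 2) * d)).

(* the claimed optimal solution, as a row vector (0-based index i is x_{i+1}) *)
Definition xstar (N : nat) (d T : R) (s : nat -> R) : 'rV[R]_(N.+1) :=
  \row_(i < N.+1)
    (if (val i == 0)%N then x1star N d T s
     else if (val i == N)%N then T - (N%:R - 2) * d - x1star N d T s
     else 2 * d).

End AoI.

(* Main.v *)
Require Import Defs.
From mathcomp Require Import all_boot all_order all_algebra.
From mathcomp Require Import ring lra.
Import Order.TTheory GRing.Theory Num.Theory.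
Local Open Scope ring_scope.

Lemma bigmax_ub (R : realFieldType) (r : seq nat) (x0 : R) (F : nat -> R) i :
  i \in r -> F i <= \big[Num.max/x0]_(j <- r) F j.
Proof.
elim: r => [|a r IH] //=; rewrite in_cons big_cons le_max.
case/orP=> [/eqP->|/IH->]; first by rewrite lexx.
by rewrite orbT.
Qed.

Lemma bigmax_lub (R : realFieldType) (r : seq nat) (x0 : R) (F : nat -> R) c :
  x0 <= c -> (forall i, i \in r -> F i <= c) -> \big[Num.max/x0]_(j <- r) F j <= c.
Proof.
move=> h0; elim: r => [|a r IH] H; first by rewrite big_nil.
rewrite big_cons ge_max H ?mem_head //= IH // => i hi.
by apply: H; rewrite in_cons hi orbT.
Qed.

Lemma sum_ge_term (R : realFieldType) (r : seq nat) (F : nat -> R) i :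
  (forall j, j \in r -> 0 <= F j) -> i \in r -> F i <= \sum_(j <- r) F j.
Proof.
elim: r => [|a r IH] //= H; rewrite in_cons big_cons.
have Ha : 0 <= F a by apply: H; rewrite mem_head.
have Hr : 0 <= \sum_(j <- r) F j.
  by rewrite big_seq; apply: sumr_ge0 => j hj; apply: H; rewrite in_cons hj orbT.
case/orP=> [/eqP->|hi]; first by lra.
have H' : forall j, j \in r -> 0 <= F j by move=> j hj; apply: H; rewrite in_cons hj orbT.
have := IH H' hi; lra.
Qed.

Lemma split3 (R : realFieldType) (N : nat) (F : nat -> R) : (1 <= N)%N ->
  \sum_(1 <= i < N.+2) F i = F 1%N + \sum_(2 <= i < N.+1) F i + F N.+1.
Proof. by move=> hN; rewrite big_nat_recr //= big_ltn // addrA. Qed.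

Lemma Lk (R : realFieldType) (N : nat) (d T : R) (s : nat -> R) y k :
  feasible R N d T s y -> (1 <= k <= N)%N ->
  s k - (k%:R - 2) * d <= \sum_(1 <= i < N.+1) xc R N y i - 2 * (N%:R - 1) * d.
Proof.
case=> Hp Hm _ _ /andP[hk1 hkN].
have hk := Hp k (introT andP (conj hk1 hkN)).
rewrite (big_cat_nat _ (n:=k.+1)) //=.
have : \sum_(k.+1 <= i < N.+1) (2 * d) <= \sum_(k.+1 <= i < N.+1) xc R N y i.
  apply: ler_sum_nat => i /andP[h1 h2]; apply: Hm.
  by rewrite (leq_trans _ h1) ?ltnS // -ltnS.
rewrite sumr_const_nat subSS -[(2 * d) *+ _]mulr_natr natrB //.
lra.
Qed.

Arguments Lk {R N d T s y} k.

Lemma mle (R : realFieldType) (N : nat) (d T : R) (s : nat -> R) y :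
  (1 <= N)%N -> feasible R N d T s y ->
  \big[Num.max/(s 1%N - (1 - 2) * d)]_(1 <= k < N.+1) (s k - (k%:R - 2) * d)
   <= T - (N%:R - 2) * d - xc R N y N.+1.
Proof.
move=> hN Hf.
have Hs : \sum_(1 <= i < N.+1) xc R N y i = T + N%:R * d - xc R N y N.+1.
  by case: Hf => _ _ _; rewrite big_nat_recr //= => H; lra.
apply: bigmax_lub.
  have := Lk 1 Hf; rewrite hN => /(_ isT); rewrite Hs; lra.
move=> i; rewrite mem_index_iota ltnS => hi.
have := Lk i Hf hi; rewrite Hs; lra.
Qed.

Arguments mle {R N d T s y}.

Lemma xc_star (R : realFieldType) (N : nat) (d T : R) (s : nat -> R) i :
  (1 <= N)%N -> (1 <= i <= N.+1)%N ->
  xc R N (xstar R N d T s) i =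
    if (i == 1)%N then x1star R N d T s
    else if (i == N.+1)%N then T - (N%:R - 2) * d - x1star R N d T s
    else 2 * d.
Proof.
move=> hN /andP[h1 h2]; rewrite /xc /xstar mxE.
rewrite (_ : \val (@inord N i.-1) = i.-1); last by apply: inordK; case: i h1 h2.
case: i h1 h2 => [|i] //= _ _.
Qed.

Theorem theorem1 (R : realFieldType) (N : nat) (d T : R) (s : nat -> R) :
  (1 <= N)%N -> 0 < d ->
  0 <= s 1%N -> (forall k, (1 <= k < N)%N -> s k <= s k.+1) ->
  N%:R * d <= T -> T < N.+1%:R * d ->
  (exists y : 'rV[R]_(N.+1), feasible R N d T s y) ->
  feasible R N d T s (xstar R N d T s) /\
  (forall y : 'rV[R]_(N.+1), feasible R N d T s y -> cost R N (xstar R N d T s) <= cost R N y) /\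
  (forall y : 'rV[R]_(N.+1), feasible R N d T s y -> cost R N y <= cost R N (xstar R N d T s) ->
     y = xstar R N d T s).
Proof.
move=> hN hd _ _ hT1 hT2 [y0 Hy0].
rewrite -natr1 in hT2.
set x := xstar R N d T s.
set m := \big[Num.max/(s 1%N - (1 - 2) * d)]_(1 <= k < N.+1) (s k - (k%:R - 2) * d).
set A := (T - (N%:R - 2) * d) / 2.
set x1 := x1star R N d T s.
have hx1 : x1 = Num.max A m by [].
have hm0 : m <= T - (N%:R - 2) * d - xc R N y0 N.+1 by exact: mle hN Hy0.
have [_ _ hy0N _] := Hy0.
have x1A : A <= x1 by rewrite hx1 le_max lexx.
have x1m : m <= x1 by rewrite hx1 le_max lexx orbT.
have x1le : x1 <= T - (N%:R - 1) * d.
  rewrite hx1 ge_max; apply/andP; split; rewrite /A; lra.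
have x1case : x1 = A \/ x1 = m.
  rewrite hx1 maxEle; case: ifP => _; [by right | by left].
have X1 : xc R N x 1 = x1 by rewrite xc_star ?hN.
have XN : xc R N x N.+1 = T - (N%:R - 2) * d - x1.
  rewrite xc_star // ?leqnn // (negbTE (_ : N.+1 != 1%N)) ?eqxx //.
  by rewrite eqSS -lt0n.
have XM : forall i, (2 <= i < N.+1)%N -> xc R N x i = 2 * d.
  move=> i /andP[h1 h2]; rewrite xc_star //; last by rewrite (leq_trans _ h1) //= ltnW.
  by case: i h1 h2 => [|[|i]] //= _ h2; rewrite eqSS; case: eqP h2 => // ->; rewrite ltnn.
have Fx : feasible R N d T s x.
  split.
  - move=> k /andP[hk1 hkN].
    have hFk : s k - (k%:R - 2) * d <= x1.
      by apply: le_trans x1m; apply: bigmax_ub; rewrite mem_index_iota ltnS hk1.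
    rewrite big_ltn // X1 (eq_big_nat _ _ (F2 := fun _ => 2 * d)); last first.
      move=> i /andP[h1 h2]; apply: XM; rewrite h1 /=; exact: (leq_trans h2).
    rewrite sumr_const_nat -[(2 * d) *+ _]mulr_natr natrB //.
    rewrite -natr1 in hFk *; lra.
  - move=> i /andP[h1 h2]; rewrite XM ?h1 //.
  - rewrite XN; lra.
  - rewrite split3 // X1 XN (eq_big_nat _ _ (F2 := fun _ => 2 * d)) //.
    rewrite sumr_const_nat -[(2 * d) *+ _]mulr_natr natrB // -natr1; lra.
have key : forall y, feasible R N d T s y ->
  cost R N y - cost R N x =
    \sum_(1 <= i < N.+2) (xc R N y i - xc R N x i) ^+ 2 +
    2 * \sum_(1 <= i < N.+2) xc R N x i * (xc R N y i - xc R N x i) /\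
  0 <= \sum_(1 <= i < N.+2) xc R N x i * (xc R N y i - xc R N x i).
  move=> y Hy; split.
    rewrite /cost -sumrB mulr_sumr -big_split /=.
    by apply: eq_bigr => i _; ring.
  have [Hp Hm HN Hs] := Hy.
  have [_ _ _ Hsx] := Fx.
  have Hd : \sum_(1 <= i < N.+2) (xc R N y i - xc R N x i) = 0 by rewrite sumrB Hs Hsx subrr.
  rewrite split3 // in Hd; rewrite split3 //.
  set D := \sum_(2 <= i < N.+1) (xc R N y i - xc R N x i) in Hd.
  have D0 : 0 <= D.
    rewrite /D big_seq; apply: sumr_ge0 => i; rewrite mem_index_iota => hi.
    rewrite XM // subr_ge0; apply: Hm; by case/andP: hi => -> /=; rewrite -ltnS.
  rewrite (eq_big_nat _ _ (F2 := fun i => 2 * d * (xc R N y i - xc R N x i))); last first.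
    by move=> i hi; rewrite XM.
  rewrite -mulr_sumr -/D X1 XN in Hd *.
  have hmy : m <= T - (N%:R - 2) * d - xc R N y N.+1 by exact: mle hN Hy.
  case: x1case => hc.
    rewrite hc /A in x1le Hd *; nra.
  rewrite hc /A in x1le x1A Hd *.
  have : 0 <= (2 * d - m) * D by apply: mulr_ge0; lra.
  have : (m - (T - (N%:R - 2) * d - m)) * ((T - (N%:R - 2) * d - m) - xc R N y N.+1) >= 0.
    apply: mulr_ge0; lra.
  nra.
split; first exact: Fx.
split.
  move=> y Hy; have [E P] := key y Hy.
  have : 0 <= \sum_(1 <= i < N.+2) (xc R N y i - xc R N x i) ^+ 2.
    by apply: sumr_ge0 => i _; apply: sqr_ge0.
  lra.
move=> y Hy Hc; have [E P] := key y Hy.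
have S0 : \sum_(1 <= i < N.+2) (xc R N y i - xc R N x i) ^+ 2 <= 0.
  lra.
apply/rowP => j.
apply/eqP; rewrite -subr_eq0 -sqrf_eq0; apply/eqP.
have /sum_ge_term : forall i, i \in index_iota 1 N.+2 -> 0 <= (xc R N y i - xc R N x i) ^+ 2.
  by move=> i _; apply: sqr_ge0.
move=> /(_ j.+1); rewrite mem_index_iota => /(_ (ltn_ord j)) h.
have ej : forall z : 'rV[R]_N.+1, xc R N z j.+1 = z 0 j by move=> z; rewrite /xc inord_val.
rewrite (ej y) (ej x) in h.
have hz := sqr_ge0 (y 0 j - x 0 j).
move: h S0 hz.
set a := (y 0 j - x 0 j) ^+ 2.
set b := \sum_(1 <= i < N.+2) (xc R N y i - xc R N x i) ^+ 2.
clearbody a b => h1 h2 h3.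
apply/eqP; rewrite eq_le h3 andbT; exact: le_trans h1 h2.
Qed.
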